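(* For $g,g'\in\mathscr T'$ let $U_{g,g'}:\mathcal F_g\to\mathcal F_{g'}$ be the unique continuous extension of the isometry $\Psi\mapsto e^{a(g-g')}\Psi$, $\Psi\in\mathcal F_{\rm fin}(\mathscr T)$. Then for all $g,g',g''\in\mathscr T'$: $U_{g,g'}$ is unitary; $U_{g,g}=\mathbb 1$; $U_{g',g}=U_{g,g'}^{-1}$; and $U_{g',g''}U_{g,g'}=U_{g,g''}$.
   Context: Let $\mathfrak h$ be a complex Hilbert space, $\mathscr T$ a topological vector space continuously embedded in $\mathfrak h$ with dense image, $\mathscr T'$ the space of continuous antilinear functionals on $\mathscr T$; write $\langle\varphi,f\rangle:=\overline{\varphi(f)}$ for $\varphi\in\mathscr T'$, $f\in\mathscr T$. $\mathcal F(\mathfrak h)$ is the symmetric Fock space; $\mathcal F_{\rm fin}(\mathscr T)$ the vectors with finitely many nonzero components, the $n$-th in the algebraic symmetric tensor product of $n$ copies of $\mathscr T$. For $g\in\mathscr T'$, $a(g)$ on $\mathcal F_{\rm fin}(\mathscr T)$ is defined linearly by $(a(g)\Psi)_n=\frac{\sqrt{n+1}}{(n+1)!}\sum_{\sigma\in S_{n+1}}\langle g,\psi_{\sigma(1)}\rangle\psi_{\sigma(2)}\otimes\cdots\otimes\psi_{\sigma(n+1)}$ for $\Psi_{n+1}=\psi_1\otimes_s\cdots\otimes_s\psi_{n+1}$; $e^{a(g)}=\sum_k a(g)^k/k!$ (finite sum on each vector). $\langle\Psi,\Phi\rangle_g:=\langle e^{a(g)}\Psi,e^{a(g)}\Phi\rangle_{\mathcal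 F(\mathfrak h)}$ is an inner product on $\mathcal F_{\rm fin}(\mathscr T)$ and $\mathcal F_g$ denotes the completion of $\mathcal F_{\rm fin}(\mathscr T)$ with respect to it. *)

(* Defs.v *)
From HB Require Import structures.
From mathcomp Require Import all_boot all_order all_algebra.
From mathcomp Require Import all_classical all_reals all_analysis.
From mathcomp Require Import complex.
From mathcomp Require Import fingroup perm.

Set Implicit Arguments.
Unset Strict Implicit.
Unset Printing Implicit Defensive.

Import Order.TTheory GRing.Theory Num.Theory.
Import numFieldTopology.Exports.
Local Open Scope ring_scope.

Section FockDefs.
Variable R : realType.
Local Notation C := (R[i]).

Definition ipnorm (V : lmodType C) (ip : V -> V -> C) (x : V) : C := sqrtC (ip x x).

Definition is_inner_product (V : lmodType C) (ip : V -> V -> C) : Prop :=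
  [/\ forall x y, ip y x = (ip x y)^*,
      forall (a : C) x y z, ip x (a *: y + z) = a * ip x y + ip x z,
      forall x, 0 <= ip x x &
      forall x, ip x x = 0 -> x = 0].

Definition ip_complete (V : lmodType C) (ip : V -> V -> C) : Prop :=
  forall u : nat -> V,
    (forall e : C, 0 < e -> exists N, forall m n, (N <= m)%N -> (N <= n)%N ->
        ipnorm ip (u m - u n) < e) ->
    exists l : V, forall e : C, 0 < e -> exists N, forall n, (N <= n)%N ->
        ipnorm ip (u n - l) < e.

Definition is_hilbert (V : lmodType C) (ip : V -> V -> C) : Prop :=
  is_inner_product ip /\ ip_complete ip.

Definition continuous_dense_embedding (T : topologicalLmodType C)
    (h : lmodType C) (iph : h -> h -> C) (iota : T -> h) : Prop :=
  [/\ forall (a : C) f f', iota (a *: f + f') = a *: iota f + iota f',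
      injective iota,
      forall f (e : C), 0 < e -> \forall f' \near f, ipnorm iph (iota f' - iota f) < e &
      forall (v : h) (e : C), 0 < e -> exists f, ipnorm iph (v - iota f) < e].

Definition in_dual (T : topologicalLmodType C) (phi : T -> C) : Prop :=
  (forall (a : C) f f', phi (a *: f + f') = a^* * phi f + phi f') /\
  (forall f (e : C), 0 < e -> \forall f' \near f, `|phi f' - phi f| < e).

Definition pairing (T : topologicalLmodType C) (phi : T -> C) (f : T) : C := (phi f)^*.

(* ---------- F_fin(T): formal finite linear combinations  sum_k c_k (psi_1 (x)_s ... (x)_s psi_n)
   An entry (c, [:: psi_1; ...; psi_n]) stands for c * psi_1 (x)_s ... (x)_s psi_n, where
   (x)_s is the symmetrization  psi_1 (x)_s ... (x)_s psi_n = 1/n! sum_sigma psi_sigma(1) (x) ... ;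
   the empty list stands for the vacuum. *)

Definition ffin (T : topologicalLmodType C) := seq (C * seq T).

Definition ffin_scale (T : topologicalLmodType C) (a : C) (Psi : ffin T) : ffin T :=
  [seq (a * x.1, x.2) | x <- Psi].

Definition sym_ip (T : topologicalLmodType C) (h : lmodType C) (iph : h -> h -> C)
    (iota : T -> h) (s t : seq T) : C :=
  if size s == size t then
    ((size s)`!%:R)^-1 *
      \sum_(sigma : 'S_(size s)) \prod_(i < size s)
          iph (iota (nth 0 s i)) (iota (nth 0 t (sigma i)))
  else 0.

Definition fock_ip (T : topologicalLmodType C) (h : lmodType C) (iph : h -> h -> C)
    (iota : T -> h) (Psi Phi : ffin T) : C :=
  \sum_(x <- Psi) \sum_(y <- Phi) (x.1)^* * y.1 * sym_ip iph iota x.2 y.2.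

Definition annih_el (T : topologicalLmodType C) (g : T -> C) (x : C * seq T) : ffin T :=
  let n := (size x.2).-1 in
  if x.2 is [::] then [::] else
  [seq (x.1 * (sqrtC (n.+1)%:R / (n.+1)`!%:R) * pairing g (nth 0 x.2 (sigma ord0)),
        [seq nth 0 x.2 (sigma (lift ord0 i)) | i <- enum 'I_n])
   | sigma : 'S_(n.+1)].

Definition annih (T : topologicalLmodType C) (g : T -> C) (Psi : ffin T) : ffin T :=
  flatten (map (annih_el g) Psi).

Definition maxdeg (T : topologicalLmodType C) (Psi : ffin T) : nat :=
  \max_(x <- Psi) size x.2.

(* e^{a(g)} = sum_k a(g)^k / k!  (the sum is finite: a(g)^k Psi = 0 for k > maxdeg Psi) *)
Definition expa (T : topologicalLmodType C) (g : T -> C) (Psi : ffin T) : ffin T :=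
  flatten [seq ffin_scale (k`!%:R)^-1 (iter k (annih g) Psi) | k <- iota 0 (maxdeg Psi).+1].

Definition ip_g (T : topologicalLmodType C) (h : lmodType C) (iph : h -> h -> C)
    (iota : T -> h) (g : T -> C) (Psi Phi : ffin T) : C :=
  fock_ip iph iota (expa g Psi) (expa g Phi).

Definition is_completion (T : topologicalLmodType C) (H : lmodType C)
    (ipH : H -> H -> C) (j : ffin T -> H) (ipV : ffin T -> ffin T -> C) : Prop :=
  [/\ is_hilbert ipH,
      forall Psi Phi, j (Psi ++ Phi) = j Psi + j Phi,
      forall (a : C) Psi, j (ffin_scale a Psi) = a *: j Psi,
      forall Psi Phi, ipH (j Psi) (j Phi) = ipV Psi Phi &
      forall (v : H) (e : C), 0 < e -> exists Psi, ipnorm ipH (v - j Psi) < e].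

Definition ip_continuous (H1 H2 : lmodType C) (ip1 : H1 -> H1 -> C)
    (ip2 : H2 -> H2 -> C) (U : H1 -> H2) : Prop :=
  forall x (e : C), 0 < e -> exists2 d : C, 0 < d &
    forall y, ipnorm ip1 (y - x) < d -> ipnorm ip2 (U y - U x) < e.

Definition unitary (H1 H2 : lmodType C) (ip1 : H1 -> H1 -> C)
    (ip2 : H2 -> H2 -> C) (U : H1 -> H2) : Prop :=
  [/\ forall (a : C) x y, U (a *: x + y) = a *: U x + U y,
      forall x y, ip2 (U x) (U y) = ip1 x y &
      bijective U].

End FockDefs.

(* Main.v *)
Require Import Defs.
From HB Require Import structures.
From mathcomp Require Import all_boot all_order all_algebra.
From mathcomp Require Import all_classical all_reals all_analysis.
From mathcomp Require Import complex.
From mathcomp Require Import fingroup perm.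
From mathcomp Require Import ring lra.
Import Order.TTheory GRing.Theory Num.Theory.
Import numFieldTopology.Exports.
Local Open Scope ring_scope.
Section Alg.
Variable R : realType.
Local Notation C := R[i].
Variable T : topologicalLmodType C.
Local Notation fn := (T -> C).

Definition d0 : fn := fun _ => 0.

Definition psum (n : nat) (phi : seq fn) (psi : seq T) : C :=
  \sum_(s : 'S_n) \prod_(i < n) (nth d0 phi i) (nth 0 psi (s i)).

Definition ev (x : C * seq T) (phi : seq fn) : C :=
  if size x.2 == size phi then x.1 * ((size phi)`!%:R)^-1 * psum (size phi) phi x.2
  else 0.

Definition sem (X : ffin T) (phi : seq fn) : C := \sum_(x <- X) ev x phi.

Definition nsem (X : ffin T) (phi : seq fn) : C := sqrtC ((size phi)`!%:R) * sem X phi.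

Lemma psumT n (A : 'I_n -> 'I_n -> C) :
  \sum_(s : 'S_n) \prod_(i < n) A i (s i) = \sum_(s : 'S_n) \prod_(i < n) A (s i) i.
Proof.
rewrite (reindex_inj invg_inj) /=; apply: eq_bigr => s _.
rewrite (reindex_inj (@perm_inj _ s)) /=; apply: eq_bigr => i _.
by rewrite permK.
Qed.

Lemma psum_perm (phi phi' : seq fn) psi :
  perm_eq phi phi' -> psum (size phi) phi psi = psum (size phi) phi' psi.
Proof.
move=> hp; have hp' : perm_eq phi' (in_tuple phi) by rewrite perm_sym.
case/tuple_permP: hp' => p ->.
rewrite /psum.
rewrite [RHS](reindex_inj (mulgI p)) /=.
apply: eq_bigr => s _.
rewrite [LHS](reindex_inj (@perm_inj _ p)) /=.
apply: eq_bigr => i _.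
rewrite (nth_map i) ?size_enum_ord // nth_ord_enum (tnth_nth d0) /=.
by rewrite permM.
Qed.

Lemma sem_perm X (phi phi' : seq fn) :
  perm_eq phi phi' -> sem X phi = sem X phi'.
Proof.
move=> hp; apply: eq_bigr => x _; rewrite /ev -(perm_size hp).
by case: ifP => // _; rewrite (psum_perm _ _ _ hp).
Qed.

Lemma nsem_perm X (phi phi' : seq fn) :
  perm_eq phi phi' -> nsem X phi = nsem X phi'.
Proof. by move=> hp; rewrite /nsem (sem_perm X _ _ hp) (perm_size hp). Qed.


Lemma psum_cons (c : fn) (s : seq fn) psi :
  psum (size s).+1 (c :: s) psi =
  \sum_(σ : 'S_(size s).+1) c (nth 0 psi (σ ord0)) *
     \prod_(i < size s) nth d0 s i (nth 0 psi (σ (lift ord0 i))).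
Proof.
apply: eq_bigr => σ _; rewrite big_ord_recl /=.
by congr (_ * _); apply: eq_bigr => i _; rewrite lift0.
Qed.

Lemma sem_cat X Y phi : sem (X ++ Y) phi = sem X phi + sem Y phi.
Proof. by rewrite /sem big_cat. Qed.

Lemma sem_scale a X phi : sem (ffin_scale a X) phi = a * sem X phi.
Proof.
rewrite /sem /ffin_scale big_map mulr_sumr; apply: eq_bigr => x _.
by rewrite /ev /=; case: ifP; rewrite ?mulr0 // !mulrA.
Qed.

Lemma nsem_cat X Y phi : nsem (X ++ Y) phi = nsem X phi + nsem Y phi.
Proof. by rewrite /nsem sem_cat mulrDr. Qed.

Lemma nsem_scale a X phi : nsem (ffin_scale a X) phi = a * nsem X phi.
Proof. by rewrite /nsem sem_scale mulrCA. Qed.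

Lemma nsem_flatten (Xs : seq (ffin T)) phi :
  nsem (flatten Xs) phi = \sum_(X <- Xs) nsem X phi.
Proof.
elim: Xs => [|X Xs IH]; first by rewrite /nsem /sem !big_nil mulr0.
by rewrite /= nsem_cat IH big_cons.
Qed.

Lemma sem_add X (a b : fn) s :
  sem X ((fun t => a t + b t) :: s) = sem X (a :: s) + sem X (b :: s).
Proof.
rewrite /sem -big_split /=; apply: eq_bigr => x _.
rewrite /ev /=; case: ifP; rewrite ?addr0 // => _.
rewrite !psum_cons -mulrDr -big_split /=; congr (_ * _).
by apply: eq_bigr => σ _; rewrite mulrDl.
Qed.

Lemma nsem_add X (a b : fn) s :
  nsem X ((fun t => a t + b t) :: s) = nsem X (a :: s) + nsem X (b :: s).
Proof. by rewrite /nsem sem_add mulrDr. Qed.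

Lemma sem_d0 X s : sem X (d0 :: s) = 0.
Proof.
rewrite /sem big1_seq // => x _; rewrite /ev; case: ifP => // _.
rewrite psum_cons big1 ?mulr0 // => σ _; by rewrite /d0 mul0r.
Qed.

Lemma nsem_d0 X s : nsem X (d0 :: s) = 0.
Proof. by rewrite /nsem sem_d0 mulr0. Qed.


Lemma nsem_annih_el (f : fn) x phi :
  sqrtC ((size phi)`!%:R) * sem (annih_el f x) phi =
  sqrtC ((size phi).+1`!%:R) * ev x (pairing f :: phi).
Proof.
case: x => c [|psi0 psir].
  by rewrite /annih_el /sem /ev /= big_nil !mulr0.
rewrite /annih_el /= /sem big_map big_enum /=.
rewrite {2}/ev /=.
case: eqP => hs; last first.
  rewrite big1 ?mulr0 // => σ _.
  rewrite /ev /= size_map size_enum_ord; case: eqP => // e.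
  by case: hs; rewrite e.
case: hs => hn; rewrite hn.
set n := size phi; set ps := psi0 :: psir; set p := pairing f.
set L := fun σ : 'S_n.+1 => [seq ps`_(σ (lift ord0 i)) | i <- enum 'I_n].
set Pr := fun ρ : 'S_n.+1 => \prod_(k < n.+1) nth d0 (p :: phi) k (ps`_(ρ k)).
have key : forall σ : 'S_n.+1, psum n phi (L σ) * p ps`_(σ ord0) =
    \sum_(τ : 'S_n) Pr (lift_perm ord0 ord0 τ * σ)%g.
  move=> σ; rewrite /psum mulr_suml; apply: eq_bigr => τ _.
  rewrite /Pr big_ord_recl /= permM lift_perm_id mulrC; congr (_ * _).
  apply: eq_bigr => i _; rewrite add0n permM lift_perm_lift.
  by rewrite /L (nth_map i) ?size_enum_ord // nth_ord_enum.
have e1 : forall σ : 'S_n.+1,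
   ev (c * (sqrtC n.+1%:R / (n.+1)`!%:R) * p ps`_(σ ord0), L σ) phi =
   (c * (sqrtC n.+1%:R / (n.+1)`!%:R) * (n`!%:R)^-1) * (psum n phi (L σ) * p ps`_(σ ord0)).
  by move=> σ; rewrite /ev /= /L size_map size_enum_ord eqxx; ring.
rewrite (eq_bigr _ (fun σ _ => e1 σ)) -mulr_sumr.
rewrite (eq_bigr _ (fun σ _ => key σ)) exchange_big /=.
have e2 : forall τ : 'S_n, \sum_(σ in 'S_n.+1) Pr (lift_perm ord0 ord0 τ * σ)%g =
    psum n.+1 (p :: phi) ps.
  move=> τ; rewrite [RHS](reindex_inj (mulgI (lift_perm ord0 ord0 τ))) /=.
  by apply: eq_bigr.
rewrite (eq_bigr _ (fun τ _ => e2 τ)) sumr_const card_Sn.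
rewrite factS natrM sqrtCM ?nnegrE ?ler0n //.
have hf : (n`!%:R : C) != 0 by rewrite pnatr_eq0 -lt0n fact_gt0.
have hf1 : (n.+1%:R : C) != 0 by rewrite pnatr_eq0.
rewrite -mulr_natr; field.
by rewrite hf addrC natr1 hf1.
Qed.


Lemma nsem_annih (f : fn) X phi : nsem (annih f X) phi = nsem X (pairing f :: phi).
Proof.
rewrite /nsem /annih /sem big_flatten /= big_map !mulr_sumr.
by apply: eq_bigr => x _; rewrite nsem_annih_el.
Qed.

Lemma nseq_cons_cat (p : fn) k s : nseq k p ++ p :: s = p :: (nseq k p ++ s).
Proof. by elim: k => //= k ->. Qed.

Lemma nsem_iter (f : fn) k X phi :
  nsem (iter k (annih f) X) phi = nsem X (nseq k (pairing f) ++ phi).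
Proof.
elim: k phi => [//|k IH] phi.
by rewrite iterS nsem_annih IH nseq_cons_cat.
Qed.

Lemma maxdeg_ge (X : ffin T) x : x \in X -> (size x.2 <= maxdeg X)%N.
Proof.
elim: X => [//|y X IH]; rewrite inE => /orP [/eqP ->|hx];
  rewrite /maxdeg big_cons.
  by rewrite leq_max leqnn.
by rewrite leq_max IH ?orbT.
Qed.

Lemma sem_vanish X phi : (maxdeg X < size phi)%N -> sem X phi = 0.
Proof.
move=> h; rewrite /sem big1_seq // => x /andP [_ hx]; rewrite /ev.
case: eqP => // e; move: (maxdeg_ge _ _ hx); rewrite e => h'.
by move: (leq_ltn_trans h' h); rewrite ltnn.
Qed.

Lemma nsem_vanish X phi : (maxdeg X < size phi)%N -> nsem X phi = 0.
Proof. by move=> h; rewrite /nsem sem_vanish ?mulr0. Qed.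

Definition Ex (p : fn) (K : nat) (F : seq fn -> C) (phi : seq fn) : C :=
  \sum_(k < K) (k`!%:R)^-1 * F (nseq k p ++ phi).

Lemma Ex_widen p F D K1 K2 phi :
  (forall s, (D < size s)%N -> F s = 0) -> (D < K1)%N -> (K1 <= K2)%N ->
  Ex p K1 F phi = Ex p K2 F phi.
Proof.
move=> hF h1 h2; rewrite /Ex (big_ord_widen K2 (fun k => (k`!%:R)^-1 * F (nseq k p ++ phi)) h2).
rewrite [RHS](bigID (fun i : 'I_K2 => (i < K1)%N)) /= [X in _ = _ + X]big1 ?addr0 //.
move=> i; rewrite -leqNgt => hi; rewrite hF ?mulr0 //.
by rewrite size_cat size_nseq (leq_trans h1 (leq_trans hi (leq_addr _ _))).
Qed.

Lemma Ex_vanish p F D K phi :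
  (forall s, (D < size s)%N -> F s = 0) -> (D < size phi)%N -> Ex p K F phi = 0.
Proof.
move=> hF h; rewrite /Ex big1 // => i _; rewrite hF ?mulr0 //.
by rewrite size_cat (leq_trans h (leq_addl _ _)).
Qed.

Lemma nsem_expa (f : fn) X K phi : (maxdeg X < K)%N ->
  nsem (expa f X) phi = Ex (pairing f) K (nsem X) phi.
Proof.
move=> hK; rewrite -(@Ex_widen _ _ (maxdeg X) (maxdeg X).+1) //; last first.
  by move=> s; apply: nsem_vanish.
rewrite /expa nsem_flatten big_map /Ex.
have -> : iota 0 (maxdeg X).+1 = index_iota 0 (maxdeg X).+1 by rewrite /index_iota subn0.
rewrite big_mkord; apply: eq_bigr => k _.
by rewrite nsem_scale nsem_iter.
Qed.


Lemma pascal (H : nat -> nat -> C) m :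
  \sum_(0 <= i < m.+1) (binomial m i)%:R * (H i.+1 (m - i)%N + H i (m - i)%N.+1) =
  \sum_(0 <= i < m.+2) (binomial m.+1 i)%:R * H i (m.+1 - i)%N.
Proof.
rewrite [RHS]big_nat_recl // bin0 subn0.
have -> : \sum_(0 <= i < m.+1) (binomial m.+1 i.+1)%:R * H i.+1 (m.+1 - i.+1)%N =
   \sum_(0 <= i < m.+1) ((binomial m i.+1)%:R * H i.+1 (m - i)%N + (binomial m i)%:R * H i.+1 (m - i)%N).
  by apply: eq_bigr => i _; rewrite binS natrD mulrDl subSS.
rewrite big_split /=.
under eq_bigr => i _ do rewrite mulrDr.
rewrite big_split /=.
suff : \sum_(0 <= i < m.+1) (binomial m i)%:R * H i (m - i)%N.+1 =
   1 * H 0%N m.+1 + \sum_(0 <= i < m.+1) (binomial m i.+1)%:R * H i.+1 (m - i)%N.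
  by move=> ->; ring.
rewrite big_nat_recl // bin0 subn0 [in RHS]big_nat_recr //= bin_small // mul0r addr0.
congr (_ + _); rewrite !big_nat; apply: eq_bigr => i /andP [_ hi].
by rewrite subnSK.
Qed.

Lemma perm_mid (u v : seq fn) (c : fn) : perm_eq (u ++ c :: v) (c :: u ++ v).
Proof. by rewrite -cat1s perm_catCA. Qed.

Section Abstract.
Variable F : seq fn -> C.
Hypothesis Fsym : forall s s', perm_eq s s' -> F s = F s'.
Hypothesis Fadd : forall (a b : fn) s,
  F ((fun t => a t + b t) :: s) = F (a :: s) + F (b :: s).

Lemma binomF (a b : fn) m s :
  F (nseq m (fun t => a t + b t) ++ s) =
  \sum_(0 <= i < m.+1) (binomial m i)%:R * F (nseq i a ++ nseq (m - i)%N b ++ s).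
Proof.
elim: m s => [|m IH] s.
  by rewrite big_nat1 bin0 mul1r.
rewrite -[nseq m.+1 _ ++ s]/((fun t => a t + b t) :: (nseq m _ ++ s)).
rewrite -nseq_cons_cat IH.
have := pascal (fun i j => F (nseq i a ++ nseq j b ++ s)) m; rewrite /= => <-.
apply: eq_big_nat => i hi; congr (_ * _).
rewrite catA (Fsym _ _ (perm_mid _ _ _)) Fadd -catA; congr (_ + _).
by apply: Fsym; rewrite perm_sym /= perm_mid.
Qed.


Lemma tri_sum (G : nat -> nat -> C) K :
  \sum_(0 <= m < K) \sum_(0 <= i < m.+1) G i (m - i)%N =
  \sum_(0 <= i < K) \sum_(0 <= j < K - i) G i j.
Proof.
elim: K => [|K IH]; first by rewrite !big_geq.
rewrite big_nat_recr //= IH [RHS]big_nat_recr //= subSnn big_nat1.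
rewrite [X in _ = _ + X]/= big_nat_recr //= subnn.
rewrite addrA; congr (_ + _).
rewrite -big_split /=; apply: eq_big_nat => i /andP [_ hi].
by rewrite subSn ?(ltnW hi) // big_nat_recr.
Qed.

Hypothesis D : nat.
Hypothesis Fvan : forall s, (D < size s)%N -> F s = 0.

Lemma Ex_law (a b : fn) K phi : (D < K)%N ->
  Ex a K (Ex b K F) phi = Ex (fun t => a t + b t) K F phi.
Proof.
move=> hK.
set G := fun i j => (i`!%:R)^-1 * (j`!%:R)^-1 * F (nseq i a ++ nseq j b ++ phi) : C.
have hG : forall i j, (K <= i + j)%N -> G i j = 0.
  move=> i j h; rewrite /G Fvan ?mulr0 //.
  rewrite !size_cat !size_nseq addnA (leq_trans hK (leq_trans h (leq_addr _ _))) //.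
transitivity (\sum_(0 <= i < K) \sum_(0 <= j < K) G i j).
  rewrite /Ex [RHS]big_mkord; apply: eq_bigr => k _.
  rewrite mulr_sumr big_mkord; apply: eq_bigr => l _.
  rewrite /G catA (Fsym _ (nseq k a ++ nseq l b ++ phi)); first by ring.
  by rewrite -catA perm_catCA.
rewrite /Ex -(big_mkord xpredT (fun m => (m`!%:R)^-1 * F (nseq m (fun t => a t + b t) ++ phi))).
under [RHS]eq_bigr => m _ do rewrite binomF mulr_sumr.
transitivity (\sum_(0 <= m < K) \sum_(0 <= i < m.+1) G i (m - i)%N); last first.
  apply: eq_big_nat => m _; apply: eq_big_nat => i /andP [_ hi].
  rewrite /G mulrA; congr (_ * _); rewrite ltnS in hi.
  have := bin_fact hi => /(congr1 (fun n => n%:R : C)); rewrite !natrM => e.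
  have hf : forall n, (n`!%:R : C) != 0 by move=> n; rewrite pnatr_eq0 -lt0n fact_gt0.
  rewrite -e; field.
  by rewrite !hf pnatr_eq0 -lt0n bin_gt0 hi.
rewrite tri_sum; apply: eq_big_nat => i /andP [_ hi].
rewrite [LHS](big_cat_nat _ (n := K - i)) ?leq_subr //= [X in _ + X = _]big1_seq ?addr0 //.
move=> j /andP [_]; rewrite mem_index_iota => /andP [hj _]; apply: hG.
by rewrite -(leq_add2l i) subnKC ?(ltnW hi) in hj.
Qed.

End Abstract.


Lemma nsem_van X s : (maxdeg X < size s)%N -> nsem X s = 0.
Proof. exact: nsem_vanish. Qed.

Lemma nsem_sym X s s' : perm_eq s s' -> nsem X s = nsem X s'.
Proof. exact: nsem_perm. Qed.

Lemma nsem_expa2 (f1 f2 f3 : fn) X :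
  (forall t, pairing f1 t + pairing f2 t = pairing f3 t) ->
  forall phi, nsem (expa f1 (expa f2 X)) phi = nsem (expa f3 X) phi.
Proof.
move=> h phi; set K := (maxn (maxdeg X) (maxdeg (expa f2 X))).+1.
have h1 : (maxdeg X < K)%N by rewrite ltnS leq_maxl.
have h2 : (maxdeg (expa f2 X) < K)%N by rewrite ltnS leq_maxr.
rewrite (nsem_expa f1 _ _ _ h2).
have -> : nsem (expa f2 X) = Ex (pairing f2) K (nsem X).
  by apply: funext => s; rewrite (nsem_expa _ _ _ _ h1).
rewrite (Ex_law (nsem X) (nsem_sym X) (nsem_add X) (maxdeg X) (nsem_van X)) //.
have -> : (fun t => pairing f1 t + pairing f2 t) = pairing f3 by apply: funext.
by rewrite (nsem_expa _ _ _ _ h1).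
Qed.

Lemma nsem_expa0 (f : fn) X :
  (forall t, pairing f t = 0) -> forall phi, nsem (expa f X) phi = nsem X phi.
Proof.
move=> h phi; have h1 : (maxdeg X < (maxdeg X).+1)%N by [].
rewrite (nsem_expa _ _ _ _ h1) /Ex big_ord_recl /= fact0 invr1 mul1r.
have -> : pairing f = d0 by apply: funext => t; rewrite h.
by rewrite big1 ?addr0 // => i _; rewrite nsem_d0 mulr0.
Qed.

Lemma nsem_expa_cong (f : fn) X Y :
  (forall phi, nsem X phi = nsem Y phi) ->
  forall phi, nsem (expa f X) phi = nsem (expa f Y) phi.
Proof.
move=> h phi; set K := (maxn (maxdeg X) (maxdeg Y)).+1.
have h1 : (maxdeg X < K)%N by rewrite ltnS leq_maxl.
have h2 : (maxdeg Y < K)%N by rewrite ltnS leq_maxr.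
rewrite (nsem_expa _ _ _ _ h1) (nsem_expa _ _ _ _ h2).
by have -> : nsem X = nsem Y by apply: funext.
Qed.

Lemma nsem_expa_lin (f : fn) a X Y phi :
  nsem (expa f (ffin_scale a X ++ Y)) phi =
  nsem (ffin_scale a (expa f X) ++ expa f Y) phi.
Proof.
set K := (maxn (maxdeg (ffin_scale a X ++ Y)) (maxn (maxdeg X) (maxdeg Y))).+1.
have h0 : (maxdeg (ffin_scale a X ++ Y) < K)%N by rewrite ltnS leq_maxl.
have h1 : (maxdeg X < K)%N by rewrite ltnS (leq_trans (leq_maxl _ _) (leq_maxr _ _)).
have h2 : (maxdeg Y < K)%N by rewrite ltnS (leq_trans (leq_maxr _ _) (leq_maxr _ _)).
rewrite nsem_cat nsem_scale (nsem_expa _ _ _ _ h0) (nsem_expa _ _ _ _ h1)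
  (nsem_expa _ _ _ _ h2) /Ex mulr_sumr -big_split; apply: eq_bigr => k _ /=.
by rewrite nsem_cat nsem_scale; ring.
Qed.

Lemma sem_of_nsem X Y :
  (forall phi, nsem X phi = nsem Y phi) -> forall phi, sem X phi = sem Y phi.
Proof.
move=> h phi; move: (h phi); rewrite /nsem; apply: mulfI.
by rewrite sqrtC_eq0 pnatr_eq0 -lt0n fact_gt0.
Qed.

Section Fock.
Variables (h : lmodType C) (iph : h -> h -> C) (iota : T -> h).

Definition phis (s : seq T) : seq fn := map (fun w t => iph (iota w) (iota t)) s.

Lemma fock_sem W X :
  fock_ip iph iota W X = \sum_(w <- W) (w.1)^* * sem X (phis w.2).
Proof.
rewrite /fock_ip; apply: eq_bigr => w _; rewrite /sem mulr_sumr.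
apply: eq_bigr => x _; rewrite /sym_ip /ev /phis size_map eq_sym.
case: eqP => _; last by rewrite !mulr0.
rewrite -!mulrA; congr (_ * (_ * (_ * _))); apply: eq_bigr => σ _.
by apply: eq_bigr => i _; rewrite (nth_map 0).
Qed.

Lemma fock_right W X Y : (forall phi, sem X phi = sem Y phi) ->
  fock_ip iph iota W X = fock_ip iph iota W Y.
Proof. by move=> hs; rewrite !fock_sem; apply: eq_bigr => w _; rewrite hs. Qed.

Hypothesis iph_sym : forall x y, iph y x = (iph x y)^*.

Lemma sym_ip_conj s t : sym_ip iph iota t s = (sym_ip iph iota s t)^*.
Proof.
rewrite /sym_ip eq_sym; case: eqP => e; last by rewrite conjC0.
rewrite rmorphM fmorphV /= conjC_nat rmorph_sum /= e; congr (_ * _).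
rewrite (psumT _ (fun i j => iph (iota t`_i) (iota s`_j))); apply: eq_bigr => σ _.
rewrite rmorph_prod; apply: eq_bigr => i _.
by rewrite iph_sym.
Qed.

Lemma fock_conj W X : fock_ip iph iota X W = (fock_ip iph iota W X)^*.
Proof.
rewrite /fock_ip rmorph_sum exchange_big /=; apply: eq_bigr => x _.
rewrite rmorph_sum; apply: eq_bigr => w _.
by rewrite sym_ip_conj !rmorphM /= conjCK; ring.
Qed.

Lemma fock_both W W' X X' :
  (forall phi, sem W phi = sem W' phi) -> (forall phi, sem X phi = sem X' phi) ->
  fock_ip iph iota W X = fock_ip iph iota W' X'.
Proof.
move=> hW hX; rewrite (fock_right _ _ _ hX) fock_conj (fock_right _ _ _ hW) -fock_conj //.
Qed.

End Fock.

End Alg.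
Arguments nsem_expa_cong {R T}.
Arguments sem_of_nsem {R T}.
Arguments fock_right {R T h}.
Arguments fock_both {R T h}.
Arguments nsem_expa0 {R T}.
Arguments nsem_expa2 {R T}.
Arguments nsem_expa_lin {R T}.
Arguments nsem {R T}.
Arguments sem {R T}.

Section IP.
Variable R : realType.
Local Notation C := R[i].
Variables (V : lmodType C) (ip : V -> V -> C).
Hypothesis Hip : is_inner_product ip.
Local Notation N := (ipnorm ip).

Lemma ip_sym x y : ip y x = (ip x y)^*.
Proof. by case: Hip. Qed.
Lemma ip_lin a x y z : ip x (a *: y + z) = a * ip x y + ip x z.
Proof. by case: Hip. Qed.
Lemma ip_ge0 x : 0 <= ip x x.
Proof. by case: Hip. Qed.
Lemma ip_def x : ip x x = 0 -> x = 0.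
Proof. by case: Hip => _ _ _; apply. Qed.

Lemma ip0r x : ip x 0 = 0.
Proof.
have := ip_lin 1 x 0 0; rewrite scaler0 addr0 mul1r => e.
by move: e; rewrite -{1}[ip x 0]addr0 => /addrI /esym.
Qed.
Lemma ipDr x y z : ip x (y + z) = ip x y + ip x z.
Proof. by rewrite -[y]scale1r ip_lin mul1r scale1r. Qed.
Lemma ipZr a x y : ip x (a *: y) = a * ip x y.
Proof. by rewrite -[a *: y]addr0 ip_lin ip0r addr0. Qed.
Lemma ipNr x y : ip x (- y) = - ip x y.
Proof. by rewrite -scaleN1r ipZr mulN1r. Qed.
Lemma ipBr x y z : ip x (y - z) = ip x y - ip x z.
Proof. by rewrite ipDr ipNr. Qed.
Lemma ipDl x y z : ip (y + z) x = ip y x + ip z x.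
Proof. by rewrite ip_sym ipDr rmorphD /= -!ip_sym. Qed.
Lemma ipZl a x y : ip (a *: y) x = a^* * ip y x.
Proof. by rewrite ip_sym ipZr rmorphM /= -ip_sym. Qed.
Lemma ipNl x y : ip (- y) x = - ip y x.
Proof. by rewrite ip_sym ipNr rmorphN /= -ip_sym. Qed.
Lemma ipBl x y z : ip (y - z) x = ip y x - ip z x.
Proof. by rewrite ipDl ipNl. Qed.

Lemma ip_real x : ip x x \is Num.real.
Proof. exact: ger0_real (ip_ge0 x). Qed.

Lemma N_ge0 x : 0 <= N x.
Proof. by rewrite /ipnorm sqrtC_ge0 ip_ge0. Qed.
Lemma N_sq x : N x ^+ 2 = ip x x.
Proof. by rewrite /ipnorm sqrtCK. Qed.
Lemma N_eq0 x : N x = 0 -> x = 0.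
Proof. by move=> /eqP; rewrite /ipnorm sqrtC_eq0 => /eqP /ip_def. Qed.
Lemma N_opp x : N (- x) = N x.
Proof. by rewrite /ipnorm ipNl ipNr opprK. Qed.
Lemma N_subC x y : N (x - y) = N (y - x).
Proof. by rewrite -N_opp opprB. Qed.
Lemma N_scale a x : N (a *: x) = `|a| * N x.
Proof.
rewrite /ipnorm ipZl ipZr mulrA -normCKC sqrtCM ?nnegrE ?exprn_ge0 ?ip_ge0 //.
by rewrite sqrCK.
Qed.

Lemma CS x y : `|ip x y| <= N x * N y.
Proof.
have [->|ny] := eqVneq y 0.
  by rewrite ip0r normr0 mulr_ge0 ?N_ge0.
set z := ip x y; set A := ip x x; set B := ip y y.
have hB : 0 < B.
  rewrite lt0r ip_ge0 andbT; apply/eqP => /ip_def; exact/eqP.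
have hBc : B^* = B by apply: conj_Creal; apply: ip_real.
set c := - z^* / B.
have h0 := ip_ge0 (c *: y + x).
have e : ip (c *: y + x) (c *: y + x) = A - z * z^* / B.
  rewrite ipDl !ipZl ip_lin ip_lin -/A -/B -/z.
  have -> : ip y x = z^* by rewrite ip_sym.
  rewrite /c rmorphM rmorphN fmorphV /= conjCK hBc.
  field; by rewrite gt_eqF.
rewrite e in h0.
have h1 : z * z^* <= A * B.
  rewrite -subr_ge0; have := mulr_ge0 h0 (ltW hB).
  have -> : (A - z * z^* / B) * B = A * B - z * z^* by field; rewrite gt_eqF.
  done.
rewrite -(ler_pXn2r (_ : (0 < 2)%N)) ?nnegrE ?normr_ge0 ?mulr_ge0 ?N_ge0 //.
by rewrite normCK exprMn !N_sq.
Qed.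

Lemma tri x y : N (x + y) <= N x + N y.
Proof.
rewrite -(ler_pXn2r (_ : (0 < 2)%N)) ?nnegrE ?N_ge0 ?addr_ge0 ?N_ge0 //.
rewrite N_sq ipDl !ipDr sqrrD !N_sq.
have -> : ip y x = (ip x y)^* by rewrite ip_sym.
have hre : ip x y + (ip x y)^* <= N x * N y *+ 2.
  have := (leif_Re_Creal (ip x y)).1.
  rewrite ReE => h.
  have -> : ip x y + (ip x y)^* = ((ip x y + (ip x y)^*) / 2%:R) * 2%:R.
    by rewrite divfK // pnatr_eq0.
  rewrite -(mulr_natr (N x * N y) 2) ler_pM2r ?ltr0n //.
  exact: le_trans h (CS x y).
have -> : ip x x + ip x y + ((ip x y)^* + ip y y) =
  (ip x x + ip y y) + (ip x y + (ip x y)^*) by ring.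
have -> : ip x x + N x * N y *+ 2 + ip y y = (ip x x + ip y y) + N x * N y *+ 2 by ring.
by rewrite lerD2l.
Qed.

End IP.
Arguments ip_sym {R V ip}.
Arguments ip_lin {R V ip}.
Arguments ip_ge0 {R V ip}.
Arguments ip_def {R V ip}.
Arguments ip0r {R V ip}.
Arguments ipDr {R V ip}.
Arguments ipZr {R V ip}.
Arguments ipNr {R V ip}.
Arguments ipBr {R V ip}.
Arguments ipDl {R V ip}.
Arguments ipZl {R V ip}.
Arguments ipNl {R V ip}.
Arguments ipBl {R V ip}.
Arguments ip_real {R V ip}.
Arguments N_ge0 {R V ip}.
Arguments N_sq {R V ip}.
Arguments N_eq0 {R V ip}.
Arguments N_opp {R V ip}.
Arguments N_subC {R V ip}.
Arguments N_scale {R V ip}.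
Arguments CS {R V ip}.
Arguments tri {R V ip}.

Section Cont.
Variable R : realType.
Local Notation C := R[i].

Lemma cont_id (V : lmodType C) (ip : V -> V -> C) : ip_continuous ip ip id.
Proof. by move=> x e he; exists e. Qed.

Lemma cont_comp (V1 V2 V3 : lmodType C) (ip1 : V1 -> V1 -> C) (ip2 : V2 -> V2 -> C)
  (ip3 : V3 -> V3 -> C) (F : V1 -> V2) (G : V2 -> V3) :
  ip_continuous ip1 ip2 F -> ip_continuous ip2 ip3 G ->
  ip_continuous ip1 ip3 (fun x => G (F x)).
Proof.
move=> hF hG x e he; have [d2 hd2 h2] := hG (F x) e he.
have [d1 hd1 h1] := hF x d2 hd2; exists d1 => // y hy.
exact: h2 (h1 y hy).
Qed.

Lemma lip_cont (V1 V2 : lmodType C) (ip1 : V1 -> V1 -> C) (ip2 : V2 -> V2 -> C)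
  (F : V1 -> V2) k :
  is_inner_product ip1 -> 0 <= k ->
  (forall x y, ipnorm ip2 (F y - F x) <= k * ipnorm ip1 (y - x)) ->
  ip_continuous ip1 ip2 F.
Proof.
move=> H1 hk hF x e he.
have hk1 : 0 < k + 1 by rewrite ltr_wpDl // ltr01.
exists (e / (k + 1)); first by rewrite divr_gt0.
move=> y hy; apply: le_lt_trans (hF x y) _.
apply: le_lt_trans (_ : (k + 1) * ipnorm ip1 (y - x) < e).
  by rewrite ler_wpM2r ?N_ge0 // lerDl ler01.
by rewrite -(ltr_pM2l hk1) mulrCA divff ?mulr1 ?gt_eqF // in hy.
Qed.

Lemma cont_affine (V : lmodType C) (ip : V -> V -> C) (a : C) (c : V) :
  is_inner_product ip -> ip_continuous ip ip (fun x => a *: x + c).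
Proof.
move=> H; apply: (@lip_cont _ _ _ _ _ `|a| H (normr_ge0 a)) => x y.
have -> : a *: y + c - (a *: x + c) = a *: (y - x).
  by rewrite scalerBr opprD addrACA subrr addr0.
by rewrite N_scale.
Qed.

Definition ipC (a b : C^o) : C := a^* * b.

Lemma ipC_ip : is_inner_product ipC.
Proof.
split.
- by move=> x y; rewrite /ipC rmorphM /= conjCK mulrC.
- by move=> a x y z; rewrite /ipC; change (a *: y) with (a * y); ring.
- by move=> x; rewrite /ipC mulrC mul_conjC_ge0.
- by move=> x /eqP; rewrite /ipC mulrC mul_conjC_eq0 => /eqP.
Qed.

Lemma ipnormC (w : C^o) : ipnorm ipC w = `|w|.
Proof. by rewrite /ipnorm /ipC -normCKC sqrCK. Qed.

Lemma cont_ip (V : lmodType C) (ip : V -> V -> C) (c : V) :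
  is_inner_product ip -> ip_continuous ip ipC (fun y => (ip c y : C^o)).
Proof.
move=> H; apply: (@lip_cont _ _ _ _ _ (ipnorm ip c) H) => [|x y]; first exact: N_ge0.
by rewrite ipnormC -(ipBr H); apply: CS.
Qed.

Lemma uniq_ext (I : Type) (V1 V2 : lmodType C) (ip1 : V1 -> V1 -> C)
  (ip2 : V2 -> V2 -> C) (D : I -> V1) (F1 F2 : V1 -> V2) :
  is_inner_product ip1 -> is_inner_product ip2 ->
  (forall v e, 0 < e -> exists i, ipnorm ip1 (v - D i) < e) ->
  ip_continuous ip1 ip2 F1 -> ip_continuous ip1 ip2 F2 ->
  (forall i, F1 (D i) = F2 (D i)) -> forall x, F1 x = F2 x.
Proof.
move=> H1 H2 hD c1 c2 hi x; apply/eqP; rewrite -subr_eq0; apply/eqP.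
apply: (N_eq0 H2).
set e := ipnorm ip2 (F1 x - F2 x).
have [//|hne] := eqVneq e 0.
have he : 0 < e by rewrite lt0r hne N_ge0.
have he2 : 0 < e / 2%:R by rewrite divr_gt0 // ltr0n.
have [d1 hd1 h1] := c1 x _ he2; have [d2 hd2 h2] := c2 x _ he2.
have [d [hd [hd1' hd2']]] : exists d, 0 < d /\ d <= d1 /\ d <= d2.
  case: (real_leP (gtr0_real hd1) (gtr0_real hd2)) => h.
    by exists d1; rewrite lexx.
  by exists d2; rewrite lexx (ltW h).
have [i hxi] := hD x d hd.
have hix : ipnorm ip1 (D i - x) < d by rewrite (N_subC H1).
have hA := h1 _ (lt_le_trans hix hd1'); have hB := h2 _ (lt_le_trans hix hd2').
have : e < e.
  rewrite {1}/e.
  have -> : F1 x - F2 x = (F1 x - F1 (D i)) + (F2 (D i) - F2 x).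
    by rewrite hi addrA subrK.
  apply: le_lt_trans (tri H2 _ _) _.
  rewrite (N_subC H2 (F1 x)).
  by rewrite [X in _ < X](splitr e) ltrD.
by rewrite ltxx.
Qed.

End Cont.
Arguments cont_id {R V ip}.
Arguments cont_comp {R V1 V2 V3 ip1 ip2 ip3 F G}.
Arguments lip_cont {R V1 V2 ip1 ip2 F}.
Arguments cont_affine {R V ip}.
Arguments cont_ip {R V ip}.
Arguments uniq_ext {R I V1 V2 ip1 ip2}.

Section Main.
Variable R : realType.
Local Notation C := R[i].
Variables (h : lmodType C) (iph : h -> h -> C) (T : topologicalLmodType C)
  (iota : T -> h) (H : (T -> C) -> lmodType C) (ipH : forall g, H g -> H g -> C)
  (j : forall g, ffin T -> H g) (U : forall g g', H g -> H g').
Hypothesis Hh : is_hilbert iph.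
Hypothesis Hcomp : forall g, in_dual g -> is_completion (ipH g) (j g) (ip_g iph iota g).
Hypothesis HU : forall g g', in_dual g -> in_dual g' ->
     ip_continuous (ipH g) (ipH g') (U g g') /\
     (forall Psi, U g g' (j g Psi) = j g' (expa (fun f => g f - g' f) Psi)).

Lemma Hip g : in_dual g -> is_inner_product (ipH g).
Proof. by move=> dg; case: (Hcomp _ dg) => [[]]. Qed.
Lemma Hadd g : in_dual g -> forall X Y, j g (X ++ Y) = j g X + j g Y.
Proof. by move=> dg; case: (Hcomp _ dg). Qed.
Lemma Hscal g : in_dual g -> forall a X, j g (ffin_scale a X) = a *: j g X.
Proof. by move=> dg; case: (Hcomp _ dg). Qed.
Lemma Hipeq g : in_dual g -> forall X Y, ipH g (j g X) (j g Y) = ip_g iph iota g X Y.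
Proof. by move=> dg; case: (Hcomp _ dg). Qed.
Lemma Hdense g : in_dual g ->
  forall (v : H g) (e : C), 0 < e -> exists Psi, ipnorm (ipH g) (v - j g Psi) < e.
Proof. by move=> dg; case: (Hcomp _ dg). Qed.

Lemma iph_sym x y : iph y x = (iph x y)^*.
Proof. by case: Hh => [[]]. Qed.

Lemma jP g (dg : in_dual g) X Y :
  (forall phi, nsem X phi = nsem Y phi) -> j g X = j g Y.
Proof.
move=> hXY.
have hs := sem_of_nsem _ _ (nsem_expa_cong g X Y hXY).
have hZ : forall Z, ipH g (j g Z) (j g X) = ipH g (j g Z) (j g Y).
  by move=> Z; rewrite !Hipeq // /ip_g (fock_right iph iota _ _ _ hs).
have hd : j g (X ++ ffin_scale (-1) Y) = j g X - j g Y.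
  by rewrite Hadd // Hscal // scaleN1r.
apply/eqP; rewrite -subr_eq0; apply/eqP; apply: (ip_def (Hip _ dg)).
by rewrite -{1}hd (ipBr (Hip _ dg)) hZ subrr.
Qed.

Lemma U_img g g' (dg : in_dual g) (dg' : in_dual g') Psi :
  U g g' (j g Psi) = j g' (expa (fun f => g f - g' f) Psi).
Proof. exact: (HU _ _ dg dg').2. Qed.

Lemma U_cont g g' (dg : in_dual g) (dg' : in_dual g') :
  ip_continuous (ipH g) (ipH g') (U g g').
Proof. exact: (HU _ _ dg dg').1. Qed.

Lemma U_id_img g (dg : in_dual g) Psi : U g g (j g Psi) = j g Psi.
Proof.
rewrite U_img //; apply: jP => // phi; apply: nsem_expa0 => t.
by rewrite /pairing subrr conjC0.
Qed.

Lemma U_comp_img g g' g'' (dg : in_dual g) (dg' : in_dual g') (dg'' : in_dual g'') Psi :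
  U g' g'' (U g g' (j g Psi)) = U g g'' (j g Psi).
Proof.
rewrite !U_img //; apply: jP => // phi; apply: nsem_expa2 => t.
by rewrite /pairing -rmorphD /=; congr (_^*); ring.
Qed.

Lemma U_lin_img g g' (dg : in_dual g) (dg' : in_dual g') a Psi Phi :
  U g g' (a *: j g Psi + j g Phi) = a *: U g g' (j g Psi) + U g g' (j g Phi).
Proof.
rewrite -Hscal // -Hadd // !U_img // -Hscal // -Hadd //.
by apply: jP => // phi; apply: nsem_expa_lin.
Qed.

Lemma U_iso_img g g' (dg : in_dual g) (dg' : in_dual g') Psi Phi :
  ipH g' (U g g' (j g Psi)) (U g g' (j g Phi)) = ipH g (j g Psi) (j g Phi).
Proof.
rewrite !U_img // !Hipeq // /ip_g.
have e : forall X, forall phi, sem (expa g' (expa (fun f => g f - g' f) X)) phi =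
    sem (expa g X) phi.
  move=> X; apply: sem_of_nsem; apply: nsem_expa2 => t.
  by rewrite /pairing -rmorphD /=; congr (_^*); ring.
by apply: (fock_both iph iota iph_sym); apply: e.
Qed.


Lemma U_id g (dg : in_dual g) x : U g g x = x.
Proof.
apply: (uniq_ext (j g) _ id (Hip _ dg) (Hip _ dg) (Hdense _ dg)).
- exact: U_cont.
- exact: cont_id.
- by move=> Psi; rewrite U_id_img.
Qed.

Lemma U_comp g g' g'' (dg : in_dual g) (dg' : in_dual g') (dg'' : in_dual g'') x :
  U g' g'' (U g g' x) = U g g'' x.
Proof.
apply: (uniq_ext (j g) (fun x => U g' g'' (U g g' x)) (U g g'')
  (Hip _ dg) (Hip _ dg'') (Hdense _ dg)).
- exact: cont_comp (U_cont _ _ dg dg') (U_cont _ _ dg' dg'').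
- exact: U_cont.
- by move=> Psi; rewrite U_comp_img.
Qed.

Lemma U_lin g g' (dg : in_dual g) (dg' : in_dual g') a x y :
  U g g' (a *: x + y) = a *: U g g' x + U g g' y.
Proof.
have stepA : forall Psi y, U g g' (a *: j g Psi + y) = a *: U g g' (j g Psi) + U g g' y.
  move=> Psi; apply: (uniq_ext (j g) (fun y => U g g' (a *: j g Psi + y))
    (fun y => a *: U g g' (j g Psi) + U g g' y) (Hip _ dg) (Hip _ dg') (Hdense _ dg)).
  - have := cont_comp (cont_affine 1 (a *: j g Psi) (Hip _ dg)) (U_cont _ _ dg dg').
    by have -> : (fun x => U g g' (1 *: x + a *: j g Psi)) = (fun y => U g g' (a *: j g Psi + y))
      by apply: funext => z; rewrite scale1r addrC.
  - have := cont_comp (U_cont _ _ dg dg') (cont_affine 1 (a *: U g g' (j g Psi)) (Hip _ dg')).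
    by have -> : (fun x => 1 *: U g g' x + a *: U g g' (j g Psi)) =
        (fun y => a *: U g g' (j g Psi) + U g g' y)
      by apply: funext => z; rewrite scale1r addrC.
  - by move=> Phi; rewrite U_lin_img.
apply: (uniq_ext (j g) (fun x => U g g' (a *: x + y))
    (fun x => a *: U g g' x + U g g' y) (Hip _ dg) (Hip _ dg') (Hdense _ dg)).
- exact: cont_comp (cont_affine a y (Hip _ dg)) (U_cont _ _ dg dg').
- exact: cont_comp (U_cont _ _ dg dg') (cont_affine a (U g g' y) (Hip _ dg')).
- by move=> Psi; rewrite stepA.
Qed.

Lemma U_iso g g' (dg : in_dual g) (dg' : in_dual g') x y :
  ipH g' (U g g' x) (U g g' y) = ipH g x y.
Proof.
have stepA : forall Psi y, ipH g' (U g g' (j g Psi)) (U g g' y) = ipH g (j g Psi) y.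
  move=> Psi; apply: (@uniq_ext _ _ _ _ _ (@ipC R) (j g)
    (fun y => (ipH g' (U g g' (j g Psi)) (U g g' y) : C^o))
    (fun y => (ipH g (j g Psi) y : C^o)) (Hip _ dg) (@ipC_ip R) (Hdense _ dg)).
  - exact: cont_comp (U_cont _ _ dg dg') (cont_ip _ (Hip _ dg')).
  - exact: cont_ip _ (Hip _ dg).
  - by move=> Phi; rewrite U_iso_img.
have stepB : forall x, ipH g' (U g g' y) (U g g' x) = ipH g y x.
  apply: (@uniq_ext _ _ _ _ _ (@ipC R) (j g)
    (fun x => (ipH g' (U g g' y) (U g g' x) : C^o))
    (fun x => (ipH g y x : C^o)) (Hip _ dg) (@ipC_ip R) (Hdense _ dg)).
  - exact: cont_comp (U_cont _ _ dg dg') (cont_ip _ (Hip _ dg')).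
  - exact: cont_ip _ (Hip _ dg).
  - move=> Psi /=; rewrite (ip_sym (Hip _ dg')) stepA.
    by rewrite -(ip_sym (Hip _ dg)).
by rewrite (ip_sym (Hip _ dg')) stepB -(ip_sym (Hip _ dg)).
Qed.

End Main.

Theorem proposition2p14 (R : realType)
    (h : lmodType R[i]) (iph : h -> h -> R[i])
    (T : topologicalLmodType R[i]) (iota : T -> h)
    (H : (T -> R[i]) -> lmodType R[i]) (ipH : forall g, H g -> H g -> R[i])
    (j : forall g, ffin T -> H g)
    (U : forall g g', H g -> H g') :
  is_hilbert iph ->
  continuous_dense_embedding iph iota ->
  (forall g, in_dual g -> is_completion (ipH g) (j g) (ip_g iph iota g)) ->
  (forall g g', in_dual g -> in_dual g' ->
     ip_continuous (ipH g) (ipH g') (U g g') /\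
     (forall Psi, U g g' (j g Psi) = j g' (expa (fun f => g f - g' f) Psi))) ->
  forall g g' g'', in_dual g -> in_dual g' -> in_dual g'' ->
  [/\ unitary (ipH g) (ipH g') (U g g'),
      (forall x, U g g x = x),
      cancel (U g g') (U g' g) /\ cancel (U g' g) (U g g') &
      (forall x, U g' g'' (U g g' x) = U g g'' x)].
Proof.
move=> Hh _ Hcomp HU g g' g'' dg dg' dg''.
have can1 : cancel (U g g') (U g' g).
  by move=> x; rewrite (@U_comp _ _ _ _ _ _ _ _ _ Hcomp HU _ _ _ dg dg' dg) (@U_id _ _ _ _ _ _ _ _ _ Hcomp HU _ dg).
have can2 : cancel (U g' g) (U g g').
  by move=> x; rewrite (@U_comp _ _ _ _ _ _ _ _ _ Hcomp HU _ _ _ dg' dg dg') (@U_id _ _ _ _ _ _ _ _ _ Hcomp HU _ dg').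
split.
- split.
  + by move=> a x y; rewrite (@U_lin _ _ _ _ _ _ _ _ _ Hcomp HU _ _ dg dg').
  + by move=> x y; rewrite (@U_iso _ _ _ _ _ _ _ _ _ Hh Hcomp HU _ _ dg dg').
  + exact: Bijective can1 can2.
- by move=> x; rewrite (@U_id _ _ _ _ _ _ _ _ _ Hcomp HU _ dg).
- by split.
- by move=> x; rewrite (@U_comp _ _ _ _ _ _ _ _ _ Hcomp HU _ _ _ dg dg' dg'').
Qed.
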